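(* Let $\gamma\in C^{2}(\mathbb{R})$ be either an odd or an even function which is convex on $(0,\infty)$ and satisfies: (i) $\gamma(0)=\gamma'(0)=0$; (ii) $\frac{\gamma''(t)}{\gamma'(t)}$ is decreasing on $(0,\infty)$; (iii) there is a constant $C_1>0$ with $\frac{t\gamma''(t)}{\gamma'(t)}\geq C_1$ for all $t\in(0,\infty)$; (iv) $\gamma''$ is monotone on $(0,\infty)$. Then $\gamma$ satisfies the doubling condition (D): there exists $\lambda\in(1,\infty)$ such that $\gamma'(\lambda t)\geq 2\gamma'(t)$ for all $t\in(0,\infty)$; and $\gamma$ satisfies the infinitesimally doubling condition (ID): setting $h(t):=t\gamma'(t)-\gamma(t)$, there exists $\varepsilon_0\in(0,\infty)$ such that $h'(t)\geq \varepsilon_0\frac{h(t)}{t}$ for all $t\in(0,\infty)$. *)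

(* Defs.v *)
From Stdlib Require Import Reals Lra.
From Coquelicot Require Import Coquelicot.
Open Scope R_scope.

Definition C2 (f : R -> R) : Prop :=
  (forall x, ex_derive f x) /\
  (forall x, ex_derive (Derive f) x) /\
  (forall x, continuous (Derive (Derive f)) x).

Definition odd_fun (f : R -> R) : Prop := forall x, f (- x) = - f x.
Definition even_fun (f : R -> R) : Prop := forall x, f (- x) = f x.

Definition convex_on_pos (f : R -> R) : Prop :=
  forall x y t, 0 < x -> 0 < y -> 0 <= t <= 1 ->
    f (t * x + (1 - t) * y) <= t * f x + (1 - t) * f y.

Definition decreasing_on_pos (g : R -> R) : Prop :=
  forall s t, 0 < s -> s <= t -> g t <= g s.

Definition increasing_on_pos (g : R -> R) : Prop :=
  forall s t, 0 < s -> s <= t -> g s <= g t.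

Definition monotone_on_pos (g : R -> R) : Prop :=
  increasing_on_pos g \/ decreasing_on_pos g.

Definition doubling (f : R -> R) : Prop :=
  exists lam, 1 < lam /\ forall t, 0 < t -> Derive f (lam * t) >= 2 * Derive f t.

Definition hfun (f : R -> R) (t : R) : R := t * Derive f t - f t.

Definition inf_doubling (f : R -> R) : Prop :=
  exists eps0, 0 < eps0 /\
    forall t, 0 < t -> Derive (hfun f) t >= eps0 * (hfun f t / t).

(* Main.v *)
Require Import Defs.
From Stdlib Require Import Reals Lra.
From Coquelicot Require Import Coquelicot.
Open Scope R_scope.

Lemma mvt (f df : R -> R) (a b : R) : a < b ->
  (forall x, a <= x <= b -> is_derive f x (df x)) ->
  exists c, a <= c <= b /\ f b - f a = df c * (b - a).
Proof.
  intros Hab Hd.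
  destruct (MVT_gen f a b df) as [c [Hc E]].
  - intros x Hx. rewrite Rmin_left in Hx by lra. rewrite Rmax_right in Hx by lra.
    apply Hd; lra.
  - intros x Hx. rewrite Rmin_left in Hx by lra. rewrite Rmax_right in Hx by lra.
    apply continuity_pt_filterlim. apply (ex_derive_continuous (K:=R_AbsRing) (V:=R_NormedModule)).
    eexists; apply Hd; lra.
  - rewrite Rmin_left in Hc by lra. rewrite Rmax_right in Hc by lra.
    exists c; split; auto.
Qed.

Lemma isd_minus (f g : R -> R) x df dg : is_derive f x df -> is_derive g x dg ->
  is_derive (fun y => f y - g y) x (df - dg).
Proof. intros A B. exact (is_derive_minus (K:=R_AbsRing) (V:=R_NormedModule) f g x df dg A B). Qed.

Lemma isd_mult (f g : R -> R) x df dg : is_derive f x df -> is_derive g x dg ->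
  is_derive (fun y => f y * g y) x (df * g x + f x * dg).
Proof. intros A B. exact (is_derive_mult (K:=R_AbsRing) f g x df dg A B Rmult_comm). Qed.

Lemma isd_comp (f g : R -> R) x df dg : is_derive f (g x) df -> is_derive g x dg ->
  is_derive (fun y => f (g y)) x (dg * df).
Proof. intros A B. exact (is_derive_comp (K:=R_AbsRing) (V:=R_NormedModule) f g x df dg A B). Qed.

Theorem lemma3p1 (gamma : R -> R) (C1 : R) :
  C2 gamma ->
  (odd_fun gamma \/ even_fun gamma) ->
  convex_on_pos gamma ->
  gamma 0 = 0 -> Derive gamma 0 = 0 ->
  decreasing_on_pos (fun t => Derive (Derive gamma) t / Derive gamma t) ->
  0 < C1 ->
  (forall t, 0 < t -> t * Derive (Derive gamma) t / Derive gamma t >= C1) ->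
  monotone_on_pos (Derive (Derive gamma)) ->
  doubling gamma /\ inf_doubling gamma.
Proof.
  intros [Hd1 [Hd2 _]] _ Hconv H0 H10 _ HC1 H3 _.
  set (g1 := Derive gamma) in *.
  set (g2 := Derive g1) in *.
  assert (D1 : forall x, is_derive gamma x (g1 x)).
  { intro x. apply Derive_correct, Hd1. }
  assert (D2 : forall x, is_derive g1 x (g2 x)).
  { intro x. apply Derive_correct, Hd2. }
  assert (nz : forall t, 0 < t -> g1 t <> 0).
  { intros t Ht E. specialize (H3 t Ht). rewrite E in H3.
    unfold Rdiv in H3. rewrite Rinv_0 in H3. lra. }
  assert (rat : forall t, 0 < t -> g2 t / g1 t >= C1 / t).
  { intros t Ht. specialize (H3 t Ht).
    apply Rle_ge. apply (Rmult_le_reg_l t); [lra|].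
    replace (t * (C1 / t)) with C1 by (field; lra).
    unfold Rdiv in *. lra. }
  assert (sgn : forall t, 0 < t -> g2 t * g1 t > 0).
  { intros t Ht. specialize (rat t Ht). specialize (nz t Ht).
    assert (C1 / t > 0) by (apply Rdiv_lt_0_compat; lra).
    replace (g2 t * g1 t) with ((g2 t / g1 t) * (g1 t * g1 t)) by (field; auto).
    apply Rmult_gt_0_compat; [lra|].
    destruct (Rlt_or_le 0 (g1 t)); [nra|].
    assert (g1 t < 0) by lra. nra. }
  assert (contg1 : continuity g1).
  { intro x. apply continuity_pt_filterlim. apply (ex_derive_continuous (K:=R_AbsRing) (V:=R_NormedModule)).
    eexists; apply D2. }
  assert (pos : forall t, 0 < t -> 0 < g1 t).
  { intros t0 Ht0. destruct (Rlt_or_le 0 (g1 t0)) as [|Hle]; auto.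
    exfalso.
    assert (neg : forall s, 0 < s -> g1 s < 0).
    { intros s Hs. destruct (Rlt_or_le (g1 s) 0) as [|Hs2]; auto.
      exfalso.
      assert (g1 s > 0). { destruct Hs2; auto. exfalso; apply (nz s Hs); auto. }
      assert (g1 t0 < 0). { destruct Hle; auto. exfalso; apply (nz t0 Ht0); auto. }
      destruct (IVT_gen g1 s t0 0 contg1) as [c [Hc Ec]].
      { rewrite Rmin_right by lra. rewrite Rmax_left by lra. lra. }
      apply (nz c); auto.
      assert (0 < Rmin s t0) by (apply Rmin_glb_lt; lra). lra. }
    assert (neg2 : forall s, 0 < s -> g2 s < 0).
    { intros s Hs. specialize (sgn s Hs). specialize (neg s Hs). nra. }
    assert (dec : forall a b, 0 < a -> a < b -> g1 b < g1 a).
    { intros a b Ha Hab. destruct (mvt g1 g2 a b Hab) as [c [Hc E]].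
      { intros; apply D2. }
      specialize (neg2 c ltac:(lra)). nra. }
    specialize (Hconv 1 5 (1/2) ltac:(lra) ltac:(lra) ltac:(lra)).
    replace (1/2 * 1 + (1 - 1/2) * 5) with 3 in Hconv by field.
    destruct (mvt gamma g1 1 2 ltac:(lra) (fun x _ => D1 x)) as [a1 [Ha1 E1]].
    destruct (mvt gamma g1 2 3 ltac:(lra) (fun x _ => D1 x)) as [a2 [Ha2 E2]].
    destruct (mvt gamma g1 3 4 ltac:(lra) (fun x _ => D1 x)) as [b1 [Hb1 F1]].
    destruct (mvt gamma g1 4 5 ltac:(lra) (fun x _ => D1 x)) as [b2 [Hb2 F2]].
    assert (g1 b1 < g1 a1) by (apply dec; lra).
    assert (g1 b2 < g1 a2) by (apply dec; lra).
    lra. }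
  assert (gpos : forall t, 0 < t -> 0 <= gamma t).
  { intros t Ht. destruct (mvt gamma g1 0 t Ht (fun x _ => D1 x)) as [c [Hc E]].
    assert (0 <= g1 c).
    { destruct (Rlt_or_le 0 c) as [Hc0|Hc0].
      - left; apply pos; auto.
      - replace c with 0 by lra. lra. }
    rewrite H0 in E. nra. }
  split.
  - exists (exp (ln 2 / C1)). set (lam := exp (ln 2 / C1)).
    assert (Hl : 1 < lam).
    { unfold lam. rewrite <- exp_0. apply exp_increasing.
      apply Rdiv_lt_0_compat; auto. rewrite <- ln_1. apply ln_increasing; lra. }
    split; auto.
    intros t Ht.
    set (phi := fun s => ln (g1 s) - C1 * ln s).
    assert (Dphi : forall s, 0 < s -> is_derive phi s (g2 s / g1 s - C1 / s)).
    { intros s Hs. unfold phi. apply isd_minus.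
      - replace (g2 s / g1 s) with (g2 s * / g1 s) by (unfold Rdiv; auto).
        apply (isd_comp ln g1). apply is_derive_ln; auto. apply D2.
      - replace (C1 / s) with (C1 * / s) by (unfold Rdiv; auto).
        apply is_derive_scal. apply is_derive_ln; auto. }
    assert (Hlt : t < lam * t) by nra.
    destruct (mvt phi (fun s => g2 s / g1 s - C1 / s) t (lam * t) Hlt) as [c [Hc E]].
    { intros x Hx. apply Dphi. lra. }
    assert (E2 : phi (lam * t) - phi t >= 0).
    { rewrite E. specialize (rat c ltac:(lra)). nra. }
    unfold phi in E2. rewrite ln_mult in E2 by lra.
    unfold lam in E2. rewrite ln_exp in E2.
    replace (C1 * (ln 2 / C1)) with (ln 2) in E2 by (field; lra).
    assert (P1 := pos t Ht). assert (P2 := pos (lam * t) ltac:(lra)).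
    apply Rle_ge. destruct (Rle_or_lt (2 * g1 t) (g1 (lam * t))) as [|Hc2]; auto.
    exfalso. apply ln_increasing in Hc2; [|lra].
    rewrite ln_mult in Hc2 by lra.
    replace (C1 * (ln 2 / C1 + ln t)) with (ln 2 + C1 * ln t) in E2 by (field; lra).
    fold lam in E2. lra.
  - exists C1. split; auto. intros t Ht.
    assert (Dh : is_derive (hfun gamma) t (t * g2 t)).
    { unfold hfun. fold g1.
      replace (t * g2 t) with ((1 * g1 t + t * g2 t) - g1 t) by ring.
      apply isd_minus; [|apply D1].
      apply isd_mult; [apply (is_derive_id (K:=R_AbsRing)) | apply D2]. }
    rewrite (is_derive_unique _ _ _ Dh). unfold hfun. fold g1.
    specialize (H3 t Ht). specialize (pos t Ht). specialize (gpos t Ht).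
    assert (t * g2 t >= C1 * g1 t).
    { apply Rle_ge. apply (Rmult_le_reg_r (/ g1 t)). apply Rinv_0_lt_compat; auto.
      rewrite Rmult_assoc, Rinv_r by lra. unfold Rdiv in H3. lra. }
    assert ((t * g1 t - gamma t) / t <= g1 t).
    { apply (Rmult_le_reg_l t); auto. replace (t * ((t * g1 t - gamma t) / t)) with (t * g1 t - gamma t) by (field; lra). lra. }
    nra.
Qed.
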